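(* Let $\sigma_\rho>0$ and let $W$ follow the unit-log-Laplace distribution, i.e. $W$ has PDF $$f_W(w;\sigma_\rho)=\frac{1}{w(1-w)\sigma_\rho}\,f_\ell(A(w)),\qquad 0<w<1,$$ where $f_\ell(x)=\frac{1}{\sqrt2}\exp(-\sqrt2|x|)$ is the PDF of the Laplace distribution with location $0$ and scale $1/\sqrt2$, and $A(w)=\frac{1}{\sigma_\rho}\log\frac{w}{1-w}$. If $\sigma_\rho\le\sqrt2$, then $f_W(\cdot;\sigma_\rho)$ is unimodal with mode $w_0=1/2$. If $\sigma_\rho>\sqrt2$, then $f_W(\cdot;\sigma_\rho)$ is decreasing-increasing-decreasing-increasing with minimum points $$w_-=\frac{1}{1+\exp\big(2\,{\rm arctanh}(\sqrt2/\sigma_\rho)\big)},\qquad w_+=\frac{1}{1+\exp\big(-2\,{\rm arctanh}(\sqrt2/\sigma_\rho)\big)},$$ and maximum point $w_0=1/2$, with $0<w_-<w_0<w_+<1$. Moreover, $f_W(\cdot;\sigma_\rho)$ is not differentiable at $w_0=1/2$ and is symmetric around $w_0=1/2$.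
   Context: This is the unit-log-symmetric distribution ${\rm ULS}(\sigma_\rho,g_c)$ with density generator $g_c(x)=K_0(\sqrt{2x})$, where $K_0(u)=\frac12\int_0^\infty t^{-1}\exp(-t-\frac{u^2}{4t})\,{\rm d}t$ and $\sigma_\rho=\sigma\sqrt{2(1-\rho)}$; for this generator the ULS PDF reduces to the displayed formula. *)

(* Defs.v *)
From Stdlib Require Import Reals.
From Coquelicot Require Import Coquelicot.
Open Scope R_scope.

Definition arctanh (x : R) : R := / 2 * ln ((1 + x) / (1 - x)).

Definition f_ell (x : R) : R := / sqrt 2 * exp (- (sqrt 2 * Rabs x)).

Definition A_ul (sigma w : R) : R := / sigma * ln (w / (1 - w)).

Definition fW (sigma w : R) : R := / (w * (1 - w) * sigma) * f_ell (A_ul sigma w).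

Definition w_minus (sigma : R) : R := / (1 + exp (2 * arctanh (sqrt 2 / sigma))).
Definition w_plus (sigma : R) : R := / (1 + exp (- (2 * arctanh (sqrt 2 / sigma)))).

(* Main.v *)
Require Import Defs.
From Stdlib Require Import Reals Lra.
From Coquelicot Require Import Coquelicot.
Open Scope R_scope.

Definition Lf (c w : R) : R := - (1 + c) * ln w + (c - 1) * ln (1 - w).

Lemma fW_right s w : 0 < s -> / 2 <= w < 1 ->
  fW s w = / (s * sqrt 2) * exp (Lf (sqrt 2 / s) w).
Proof.
  intros hs [h1 h2].
  assert (hw : 0 < w) by lra. assert (hw' : 0 < 1 - w) by lra.
  assert (hq : 1 <= w / (1 - w)).
  { apply (Rmult_le_reg_r (1 - w)); [lra|]. unfold Rdiv. rewrite Rmult_assoc, Rinv_l; lra. }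
  assert (hl : 0 <= ln (w / (1 - w))). { rewrite <- ln_1. apply ln_le; lra. }
  assert (s2 : 0 < sqrt 2) by (apply sqrt_lt_R0; lra).
  unfold fW, f_ell, A_ul, Lf.
  rewrite Rabs_pos_eq.
  2:{ apply Rmult_le_pos; [left; apply Rinv_0_lt_compat; lra| exact hl]. }
  rewrite ln_div by lra.
  replace (/ (w * (1 - w) * s)) with (/ s * exp (- ln w - ln (1 - w))).
  2:{ unfold Rminus. rewrite exp_plus, !exp_Ropp, !exp_ln by lra. field. lra. }
  replace (- (1 + sqrt 2 / s) * ln w + (sqrt 2 / s - 1) * ln (1 - w))
   with ((- ln w - ln (1 - w)) + - (sqrt 2 * (/ s * (ln w - ln (1 - w))))) by (field; lra).
  rewrite exp_plus. field. lra.
Qed.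

Lemma fW_sym s w : 0 < w < 1 -> fW s (1 - w) = fW s w.
Proof.
  intros [h1 h2]. unfold fW, f_ell, A_ul.
  replace (1 - (1 - w)) with w by ring.
  replace ((1 - w) / w) with (/ (w / (1 - w))) by (field; lra).
  rewrite ln_Rinv. 2:{ apply Rdiv_lt_0_compat; lra. }
  replace (/ s * - ln (w / (1 - w))) with (- (/ s * ln (w / (1 - w)))) by ring.
  rewrite Rabs_Ropp. f_equal. f_equal. ring.
Qed.

Lemma L_mvt c x y : 0 < x -> x < y -> y < 1 ->
  exists z, x < z < y /\ Lf c y - Lf c x = (2 * z - (1 + c)) / (z * (1 - z)) * (y - x).
Proof.
  intros hx hxy hy.
  destruct (MVT_cor2 (Lf c) (fun z => (2 * z - (1 + c)) / (z * (1 - z))) x y hxy) as [z [e hz]].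
  - intros z hz. apply is_derive_Reals. unfold Lf.
    auto_derive. lra. field. lra.
  - exists z. split; [lra|exact e].
Qed.
Lemma sign_aux a z x y : 0 < z < 1 -> x < y -> a < 0 -> a / (z * (1 - z)) * (y - x) < 0.
Proof.
  intros hz hxy ha.
  assert (0 < / (z * (1 - z)) * (y - x)).
  { apply Rmult_lt_0_compat; [apply Rinv_0_lt_compat, Rmult_lt_0_compat|]; lra. }
  unfold Rdiv. rewrite Rmult_assoc. nra.
Qed.

Lemma fW_dec s x y : 0 < s -> / 2 <= x -> x < y -> y < 1 -> y <= (1 + sqrt 2 / s) / 2 ->
  fW s y < fW s x.
Proof.
  intros hs h1 h2 h3 h4.
  rewrite !fW_right by lra.
  assert (s2 : 0 < sqrt 2) by (apply sqrt_lt_R0; lra).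
  apply Rmult_lt_compat_l. { apply Rinv_0_lt_compat, Rmult_lt_0_compat; lra. }
  apply exp_increasing.
  destruct (L_mvt (sqrt 2 / s) x y) as [z [hz e]]; try lra.
  assert ((2 * z - (1 + sqrt 2 / s)) / (z * (1 - z)) * (y - x) < 0); [|lra].
  apply sign_aux; lra.
Qed.

Lemma fW_inc s x y : 0 < s -> (1 + sqrt 2 / s) / 2 <= x -> x < y -> y < 1 ->
  fW s x < fW s y.
Proof.
  intros hs h1 h2 h3.
  assert (s2 : 0 < sqrt 2) by (apply sqrt_lt_R0; lra).
  assert (0 < sqrt 2 / s) by (apply Rdiv_lt_0_compat; lra).
  rewrite !fW_right by lra.
  apply Rmult_lt_compat_l. { apply Rinv_0_lt_compat, Rmult_lt_0_compat; lra. }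
  apply exp_increasing.
  destruct (L_mvt (sqrt 2 / s) x y) as [z [hz e]]; try lra.
  assert ((- (2 * z - (1 + sqrt 2 / s))) / (z * (1 - z)) * (y - x) < 0).
  { apply sign_aux; lra. }
  assert (E : (- (2 * z - (1 + sqrt 2 / s))) / (z * (1 - z)) * (y - x) =
    - ((2 * z - (1 + sqrt 2 / s)) / (z * (1 - z)) * (y - x))) by (field; lra).
  lra.
Qed.

Lemma one_side f g x d a r : 0 < r -> (forall h, 0 < h < r -> f (x + h) = g (x + h)) ->
  f x = g x -> derivable_pt_lim f x d -> derivable_pt_lim g x a -> d = a.
Proof.
  intros hr hfg hx hf hg.
  destruct (Req_dec d a) as [|hne]; [assumption|exfalso].
  assert (he : 0 < Rabs (d - a) / 2).
  { assert (0 < Rabs (d - a)) by (apply Rabs_pos_lt; lra). lra. }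
  destruct (hf _ he) as [d1 H1]. destruct (hg _ he) as [d2 H2].
  set (h := Rmin (Rmin d1 d2) r / 2).
  assert (hpos : 0 < Rmin (Rmin d1 d2) r).
  { destruct d1, d2; simpl. repeat apply Rmin_pos; assumption. }
  assert (hm1 : Rmin (Rmin d1 d2) r <= d1) by (eapply Rle_trans; apply Rmin_l).
  assert (hm2 : Rmin (Rmin d1 d2) r <= d2) by (eapply Rle_trans; [apply Rmin_l|apply Rmin_r]).
  assert (hm3 : Rmin (Rmin d1 d2) r <= r) by apply Rmin_r.
  assert (hh : 0 < h) by (unfold h; lra).
  assert (hab : Rabs h = h) by (apply Rabs_pos_eq; lra).
  specialize (H1 h ltac:(lra) ltac:(unfold h in *; lra)).
  specialize (H2 h ltac:(lra) ltac:(unfold h in *; lra)).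
  rewrite hfg, hx in H1 by (unfold h; lra).
  set (q := (g (x + h) - g x) / h) in *.
  assert (Rabs (d - a) <= Rabs (q - d) + Rabs (q - a)).
  { replace (d - a) with (- (q - d) + (q - a)) by ring.
    eapply Rle_trans; [apply Rabs_triang|]. rewrite Rabs_Ropp. lra. }
  lra.
Qed.
Theorem theorem3 (sigma : R) (hs : 0 < sigma) :
  (sigma <= sqrt 2 ->
     (forall x y, 0 < x -> x < y -> y <= / 2 -> fW sigma x < fW sigma y) /\
     (forall x y, / 2 <= x -> x < y -> y < 1 -> fW sigma y < fW sigma x)) /\
  (sqrt 2 < sigma ->
     0 < w_minus sigma /\ w_minus sigma < / 2 /\ / 2 < w_plus sigma /\ w_plus sigma < 1 /\
     (forall x y, 0 < x -> x < y -> y <= w_minus sigma -> fW sigma y < fW sigma x) /\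
     (forall x y, w_minus sigma <= x -> x < y -> y <= / 2 -> fW sigma x < fW sigma y) /\
     (forall x y, / 2 <= x -> x < y -> y <= w_plus sigma -> fW sigma y < fW sigma x) /\
     (forall x y, w_plus sigma <= x -> x < y -> y < 1 -> fW sigma x < fW sigma y)) /\
  ~ ex_derive (fW sigma) (/ 2) /\
  (forall w, 0 < w < 1 -> fW sigma (1 - w) = fW sigma w).
Proof.
  assert (s2 : 0 < sqrt 2) by (apply sqrt_lt_R0; lra).
  assert (hc : 0 < sqrt 2 / sigma) by (apply Rdiv_lt_0_compat; lra).
  set (c := sqrt 2 / sigma) in *.
  assert (dec : forall x y, / 2 <= x -> x < y -> y < 1 -> y <= (1 + c) / 2 ->
     fW sigma y < fW sigma x) by (intros; apply fW_dec; auto).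
  assert (inc : forall x y, (1 + c) / 2 <= x -> x < y -> y < 1 ->
     fW sigma x < fW sigma y) by (intros; apply fW_inc; auto).
  split; [|split; [|split]].
  - intros hle.
    assert (c1 : 1 <= c).
    { unfold c. apply (Rmult_le_reg_r sigma); [lra|]. unfold Rdiv.
      rewrite Rmult_assoc, Rinv_l; lra. }
    assert (R : forall x y, / 2 <= x -> x < y -> y < 1 -> fW sigma y < fW sigma x)
      by (intros; apply dec; lra).
    split; [|exact R].
    intros x y hx hxy hy.
    rewrite <- (fW_sym sigma x), <- (fW_sym sigma y) by lra.
    apply R; lra.
  - intros hlt.
    assert (c1 : c < 1).
    { unfold c. apply (Rmult_lt_reg_r sigma); [lra|]. unfold Rdiv.
      rewrite Rmult_assoc, Rinv_l; lra. }
    assert (hq : 0 < (1 + c) / (1 - c)) by (apply Rdiv_lt_0_compat; lra).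
    assert (ep : w_plus sigma = (1 + c) / 2).
    { unfold w_plus, arctanh. fold c.
      replace (- (2 * (/ 2 * ln ((1 + c) / (1 - c))))) with (- ln ((1 + c) / (1 - c))) by field.
      rewrite exp_Ropp, exp_ln by lra. field. lra. }
    assert (em : w_minus sigma = (1 - c) / 2).
    { unfold w_minus, arctanh. fold c.
      replace (2 * (/ 2 * ln ((1 + c) / (1 - c)))) with (ln ((1 + c) / (1 - c))) by field.
      rewrite exp_ln by lra. field. lra. }
    rewrite ep, em.
    split; [lra|split; [lra|split; [lra|split; [lra|]]]].
    split; [|split; [|split]].
    + intros x y hx hxy hy.
      rewrite <- (fW_sym sigma x), <- (fW_sym sigma y) by lra.
      apply inc; lra.
    + intros x y hx hxy hy.
      rewrite <- (fW_sym sigma x), <- (fW_sym sigma y) by lra.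
      apply dec; lra.
    + intros x y hx hxy hy. apply dec; lra.
    + intros x y hx hxy hy. apply inc; lra.
  - intros [d hd].
    set (F := fun w => / (sigma * sqrt 2) * exp (Lf c w)).
    assert (hF : is_derive F (/ 2) (/ (sigma * sqrt 2) * exp (Lf c (/ 2)) * (- (4 * c)))).
    { unfold F, Lf. auto_derive. lra. unfold Rminus. field. lra. }
    assert (hd' : is_derive (fun w => fW sigma (1 - w)) (/ 2) (- d)).
    { replace (- d) with (scal (-1) d) by (unfold scal; simpl; unfold mult; simpl; ring).
      apply (is_derive_comp (fW sigma) (fun w => 1 - w)).
      - replace (1 - / 2) with (/ 2) by field. exact hd.
      - auto_derive. auto. ring. }
    apply is_derive_Reals in hd. apply is_derive_Reals in hd'. apply is_derive_Reals in hF.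
    assert (E1 : d = / (sigma * sqrt 2) * exp (Lf c (/ 2)) * (- (4 * c))).
    { apply (one_side (fW sigma) F (/ 2) _ _ (/ 2)); [lra| | |exact hd|exact hF].
      - intros h hh. unfold F, c. apply fW_right; lra.
      - unfold F, c. apply fW_right; lra. }
    assert (E2 : - d = / (sigma * sqrt 2) * exp (Lf c (/ 2)) * (- (4 * c))).
    { apply (one_side (fun w => fW sigma (1 - w)) F (/ 2) _ _ (/ 2)); [lra| | |exact hd'|exact hF].
      - intros h hh. unfold F, c. rewrite fW_sym by lra. apply fW_right; lra.
      - unfold F, c. rewrite fW_sym by lra. apply fW_right; lra. }
    assert (0 < / (sigma * sqrt 2) * exp (Lf c (/ 2)) * (4 * c)).
    { apply Rmult_lt_0_compat; [apply Rmult_lt_0_compat; [apply Rinv_0_lt_compat, Rmult_lt_0_compat; lra | apply exp_pos] | lra]. }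
    lra.
  - intros w hw. apply fW_sym; exact hw.
Qed.
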